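(* Let $G$ be a GSOS system and $G^+$ the positive preg system constructed from it as described in the context. Then for each closed term $p$ and action $a$: (1) for all closed $p'$, $p\xrightarrow{a}p'$ in $G$ if and only if $p\xrightarrow{a}p'$ in $G^+$; (2) $p\ \mathrm{cannot}(a)$ holds in $G^+$ if and only if $p$ has no $a$-transition in $G^+$ (and therefore in $G$).
   Context: Fix a finite nonempty set $\mathcal A$ of actions. A GSOS rule for an $l$-ary operation $f$ is a rule with premises $\{x_i\xrightarrow{a_{ij}}y_{ij}\mid i\in I^+,j\in I_i\}\cup\{x_i\not\xrightarrow{b}\mid i\in I^-,b\in\mathcal B_i\}$ and conclusion $f(x_1,\dots,x_l)\xrightarrow{c}C$, where the $x_i,y_{ij}$ are pairwise distinct variables, $I^+,I^-\subseteq\{1,\dots,l\}$, the $I_i$ finite, and $C$ a term with variables among the $x_i,y_{ij}$. A GSOS system $G$ is a finite signature with finite set of such rules; its transition relation is the unique one on closed terms such that $f(t_1,\ldots,t_l)\xrightarrow{c}t'$ iff some rule for $f$ with action $c$ and closed substitution $\sigma$ with $\sigma(x_i)=t_i$, $\sigma(C)=t'$ satisfy all premises ($\sigma(x_i)\xrightarrow{a_{ij}}\sigma(y_{ij})$; $\sigma(x_i)$ has no $b$-transition). A preg system additionally allows predicates: premises $Px_i$, $\neg Px_i$ and predicate rules with conclusion $P(f(\vec x))$, with the analogous unique semantics (a closed $f(\vec t)$ satisfies $P$ iff some predicate rule for $P$ and $f$ has all premises satisfied under some $\sigma$ with $\sigma(x_i)=t_i$). Construction of $G^+$: same signature and actions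 as $G$, predicates $\mathrm{cannot}(a)$ for each $a\in\mathcal A$. (i) Each rule of $G$ is a rule of $G^+$ with every negative premise $x\not\xrightarrow{a}$ replaced by $x\ \mathrm{cannot}(a)$. (ii) For each constant $f$ and action $a$ such that $G$ has no transition rule with principal operation $f$ and action $a$, add the axiom $f\ \mathrm{cannot}(a)$. (iii) For each operation $f$ of arity $\ge1$ and action $a$, let $R(f,a)$ be the set of rules of $G$ with principal operation $f$ and action $a$, and $H(R(f,a))$ the set of premises of those rules; for each choice function $\phi:R(f,a)\to H(R(f,a))$ mapping each rule to one of its premises, add the predicate rule with premises $\{\mathrm{neg}(\phi(\xi))\mid\xi\in R(f,a)\}$ and conclusion $f(x_1,\dots,x_l)\ \mathrm{cannot}(a)$, where $\mathrm{neg}(x\xrightarrow{a}x')=x\ \mathrm{cannot}(a)$ and $\mathrm{neg}(x\not\xrightarrow{a})=x\xrightarrow{a}x'$ for a variable $x'$, the targets of such positive transition premises being chosen pairwise distinct and fresh. *)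

(* Defs.v *)
From Stdlib Require List.
From mathcomp Require Import all_boot.
Set Implicit Arguments.
Unset Strict Implicit.
Unset Printing Implicit Defensive.

Inductive term (F V : Type) : Type :=
| Var of V
| App of F & seq (term F V).
Arguments Var {F V}.
Arguments App {F V}.

Definition cterm (F : Type) := term F Empty_set.

Fixpoint subst (F V W : Type) (s : V -> term F W) (t : term F V) : term F W :=
  match t with
  | Var v => s v
  | App f ts => App f (map (subst s) ts)
  end.

Fixpoint wf_term (F V : Type) (ar : F -> nat) (okv : V -> Prop) (t : term F V)
  : Prop :=
  match t with
  | Var v => okv v
  | App f ts => size ts = ar f /\ foldr and True (map (wf_term ar okv) ts)
  end.

Definition wf_closed (F : Type) (ar : F -> nat) (t : cterm F) : Prop :=
  wf_term ar (fun _ => False) t.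

(* GX i is the argument variable x_{i+1} of the conclusion f(x_1,...,x_l);
   GY k is the target variable of the k-th positive transition premise
   (numbered from 0).  Hence all variables x_i, y_ij are pairwise distinct
   by construction. *)
Inductive gvar := GX of nat | GY of nat.

(* Positive premises: list of (i, a) meaning x_i --a--> GY k (k = position);
   negative premises: list of (i, b) meaning x_i -/-b->. *)
Record gsos_rule (F A : Type) := GRule {
  g_op  : F;
  g_pos : seq (nat * A);
  g_neg : seq (nat * A);
  g_act : A;
  g_tgt : term F gvar }.

Record gsos (F A : Type) := GSOS {
  g_ar : F -> nat;
  g_rules : seq (gsos_rule F A) }.

Definition wf_gsos_rule (F A : Type) (ar : F -> nat) (r : gsos_rule F A) : Prop :=
  (forall k i a, onth (g_pos r) k = Some (i, a) -> i < ar (g_op r)) /\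
  (forall i b, List.In (i, b) (g_neg r) -> i < ar (g_op r)) /\
  wf_term ar (fun v => match v with
                       | GX i => i < ar (g_op r)
                       | GY k => k < size (g_pos r) end) (g_tgt r).

Definition wf_gsos (F A : Type) (G : gsos F A) : Prop :=
  forall r, List.In r (g_rules G) -> wf_gsos_rule (g_ar G) r.

Definition agrees (F : Type) (ts : seq (cterm F)) (s : gvar -> cterm F) : Prop :=
  forall i t, onth ts i = Some t -> s (GX i) = t.

(* The transition relation of a GSOS system, defined by structural recursion
   on the source term (this is the unique relation of the definition). *)
Definition gtrans (F A : Type) (G : gsos F A) :
  cterm F -> A -> cterm F -> Prop :=
  fix go (p : cterm F) : A -> cterm F -> Prop :=
  match p with
  | Var v => match v with end
  | App f ts =>
      let Ts := map go ts in
      fun c t' =>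
        exists r, List.In r (g_rules G) /\ g_op r = f /\ g_act r = c /\
        exists s : gvar -> cterm F,
          agrees ts s /\
          (forall k i a, onth (g_pos r) k = Some (i, a) ->
             exists T, onth Ts i = Some T /\ T a (s (GY k))) /\
          (forall i b, List.In (i, b) (g_neg r) ->
             exists T, onth Ts i = Some T /\ forall u, ~ T b u) /\
          t' = subst s (g_tgt r)
  end.

Record premises (A P : Type) := Prem {
  pr_pos  : seq (nat * A);   (* x_i --a--> GY k, k = position *)
  pr_neg  : seq (nat * A);
  pr_ppos : seq (nat * P);
  pr_pneg : seq (nat * P) }.

Record preg_trule (F A P : Type) := PTRule {
  t_op : F; t_prem : premises A P; t_act : A; t_tgt : term F gvar }.

Record preg_prule (F A P : Type) := PPRule {
  q_op : F; q_prem : premises A P; q_pred : P }.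

Record preg (F A P : Type) := Preg {
  p_ar : F -> nat;
  p_trules : seq (preg_trule F A P);
  p_prules : seq (preg_prule F A P) }.

Definition psem_t (F A P : Type) := ((A -> cterm F -> Prop) * (P -> Prop))%type.

Definition prem_sat (F A P : Type) (Ss : seq (psem_t F A P))
    (s : gvar -> cterm F) (pr : premises A P) : Prop :=
  (forall k i a, onth (pr_pos pr) k = Some (i, a) ->
     exists S, onth Ss i = Some S /\ S.1 a (s (GY k))) /\
  (forall i b, List.In (i, b) (pr_neg pr) ->
     exists S, onth Ss i = Some S /\ forall u, ~ S.1 b u) /\
  (forall i q, List.In (i, q) (pr_ppos pr) ->
     exists S, onth Ss i = Some S /\ S.2 q) /\
  (forall i q, List.In (i, q) (pr_pneg pr) ->
     exists S, onth Ss i = Some S /\ ~ S.2 q).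

Definition psem (F A P : Type) (G : preg F A P) : cterm F -> psem_t F A P :=
  fix go (p : cterm F) : psem_t F A P :=
  match p with
  | Var v => match v with end
  | App f ts =>
      let Ss := map go ts in
      (fun c t' =>
         exists r, List.In r (p_trules G) /\ t_op r = f /\ t_act r = c /\
         exists s : gvar -> cterm F,
           agrees ts s /\ prem_sat Ss s (t_prem r) /\ t' = subst s (t_tgt r),
       fun q =>
         exists r, List.In r (p_prules G) /\ q_op r = f /\ q_pred r = q /\
         exists s : gvar -> cterm F, agrees ts s /\ prem_sat Ss s (q_prem r))
  end.

Definition ptrans (F A P : Type) (G : preg F A P) (p : cterm F) (a : A)
  (p' : cterm F) : Prop := (psem G p).1 a p'.

Definition pholds (F A P : Type) (G : preg F A P) (p : cterm F) (q : P) : Prop :=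
  (psem G p).2 q.

(* Predicates of G^+: cannot(a) for a : A, represented by a itself. *)
Section Plus.
Variables (F A : finType) (G : gsos F A).

(* (i) negative premises x -/-b-> become x cannot(b) *)
Definition plus_trule (r : gsos_rule F A) : preg_trule F A A :=
  PTRule (g_op r) (Prem (g_pos r) [::] (g_neg r) [::]) (g_act r) (g_tgt r).

(* (ii) axioms f cannot(a) for constants without a-rules *)
Definition plus_axioms : seq (preg_prule F A A) :=
  flatten [seq [seq PPRule f (Prem [::] [::] [::] [::]) a
               | a <- enum A & ~~ has (fun r => (g_op r == f) && (g_act r == a))
                                     (g_rules G)]
          | f <- enum F & g_ar G f == 0].

(* a premise of a GSOS rule: inl (i,a) = x_i --a--> y, inr (i,b) = x_i -/-b-> *)
Definition gprem (A' : Type) := ((nat * A') + (nat * A'))%type.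

Definition prems_of (r : gsos_rule F A) : seq (gprem A) :=
  map inl (g_pos r) ++ map inr (g_neg r).

(* all choice functions phi : R(f,a) -> premises, as lists of chosen premises *)
Definition choices (rs : seq (gsos_rule F A)) : seq (seq (gprem A)) :=
  foldr (fun r acc => [seq x :: l | x <- prems_of r, l <- acc]) [:: [::]] rs.

(* neg applied to every chosen premise; fresh pairwise distinct targets are
   given by the positional GY k variables *)
Definition neg_prems (ch : seq (gprem A)) : premises A A :=
  Prem (pmap (fun x => match x with inr ib => Some ib | inl _ => None end) ch)
       [::]
       (pmap (fun x => match x with inl ia => Some ia | inr _ => None end) ch)
       [::].

Definition R_fa (f : F) (a : A) : seq (gsos_rule F A) :=
  [seq r <- g_rules G | (g_op r == f) && (g_act r == a)].

Definition plus_neg_rules : seq (preg_prule F A A) :=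
  flatten (flatten
    [seq [seq [seq PPRule f (neg_prems ch) a | ch <- choices (R_fa f a)]
         | a <- enum A]
    | f <- enum F & 0 < g_ar G f]).

Definition Gplus : preg F A A :=
  Preg (g_ar G) (map plus_trule (g_rules G)) (plus_axioms ++ plus_neg_rules).

End Plus.

(* Main.v *)
From Stdlib Require List.
From Stdlib Require Import ClassicalEpsilon Classical.
Require Import Defs.
From mathcomp Require Import all_boot.
Set Implicit Arguments.
Unset Strict Implicit.

Lemma In_seqmap (X Y : Type) (g : X -> Y) (s : seq X) y :
  List.In y (seq.map g s) <-> exists x, List.In x s /\ y = g x.
Proof.
elim: s => [|x s IH] /=; first by split=> [[]|[? []]].
split.
- case=> [<-|/IH [z [Hz Hy]]]; [by exists x; auto | by exists z; auto].
- case=> z [[<-|Hz] Hy]; [by left; rewrite Hy | right; apply/IH; exists z; auto].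
Qed.

Lemma In_flatten (X : Type) (ss : seq (seq X)) x :
  List.In x (flatten ss) <-> exists s, List.In s ss /\ List.In x s.
Proof.
elim: ss => [|s ss IH] /=; first by split=> // -[? []].
rewrite List.in_app_iff IH; split.
- case=> [H|[t [Ht H]]]; [by exists s; auto | by exists t; auto].
- case=> t [[<-|Ht] H]; [by left | right; exists t; auto].
Qed.

Lemma In_filter (X : Type) (p : pred X) (s : seq X) x :
  List.In x (filter p s) <-> List.In x s /\ p x.
Proof.
elim: s => [|y s IH] /=; first by split=> // -[].
case Hy: (p y) => /=; rewrite IH; split.
- by case=> [<-|[]]; auto.
- by case=> -[<-|H] Hx; auto.
- by case; auto.
- by case=> -[<-|H] Hx; [rewrite Hy in Hx|]; auto.
Qed.

Lemma mem_In (X : eqType) (x : X) s : x \in s -> List.In x s.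
Proof. elim: s => // y s IH; rewrite in_cons => /orP [/eqP ->|/IH]; simpl; auto. Qed.

Lemma In_has (X : Type) (p : pred X) s x : List.In x s -> p x -> has p s.
Proof. elim: s => //= y s IH [<- ->//|/IH H /H ->]; by rewrite orbT. Qed.

Lemma has_In (X : Type) (p : pred X) s : has p s -> exists x, List.In x s /\ p x.
Proof. elim: s => //= y s IH /orP [H|/IH [x [? ?]]]; [exists y| exists x]; auto. Qed.

Lemma onth_In (X : Type) (s : seq X) i x : onth s i = Some x -> List.In x s.
Proof. elim: s i => [|y s IH] [|i] //= ; [case=> ->; auto | move/IH; auto]. Qed.

Lemma In_onth (X : Type) (s : seq X) x : List.In x s -> exists i, onth s i = Some x.
Proof.
elim: s => [|y s IH] //= [->|/IH [i Hi]]; [by exists 0 | by exists i.+1].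
Qed.

Lemma onth_lt (X : Type) (s : seq X) i : i < size s -> exists x, onth s i = Some x.
Proof. elim: s i => [|y s IH] [|i] //=; [by exists y | apply IH]. Qed.

Lemma onth_size (X : Type) (s : seq X) i x : onth s i = Some x -> i < size s.
Proof. elim: s i => [|y s IH] [|i] //=; apply IH. Qed.

Lemma onth_map (X Y : Type) (g : X -> Y) (s : seq X) i :
  onth (seq.map g s) i = omap g (onth s i).
Proof. elim: s i => [|y s IH] [|i] //=. Qed.

Lemma onth_nthd (X : Type) (s : seq X) i x d : onth s i = Some x -> nth d s i = x.
Proof. exact: onth_nth. Qed.

Lemma In_pmap (X Y : Type) (g : X -> option Y) s y :
  List.In y (pmap g s) <-> exists x, List.In x s /\ g x = Some y.
Proof.
elim: s => [|x s IH] /=; first by split=> // -[? []].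
case Hx: (g x) => [z|] /=; rewrite IH; split.
- case=> [<-|[w [? ?]]]; [exists x | exists w]; auto.
- case=> w [[<-|?] H]; [rewrite Hx in H; case: H; auto | right; exists w; auto].
- case=> w [? ?]; exists w; auto.
- case=> w [[<-|?] H]; [by rewrite Hx in H | exists w; auto].
Qed.

Definition term_ind' (F V : Type) (P : term F V -> Prop)
  (HV : forall v, P (Var v))
  (HA : forall f ts, (forall t, List.In t ts -> P t) -> P (App f ts)) :
  forall t, P t :=
  fix go t := match t with
  | Var v => HV v
  | App f ts => HA f ts ((fix gol (l : seq (term F V)) : forall t, List.In t l -> P t :=
       match l with
       | nil => fun t H => False_ind _ H
       | cons u l' => fun t H => match H with
           | or_introl e => eq_ind u P (go u) t e
           | or_intror H' => gol l' t H' end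
       end) ts)
  end.

Lemma foldr_and (X : Type) (P : X -> Prop) (s : seq X) :
  foldr and True (map P s) <-> forall t, List.In t s -> P t.
Proof.
elim: s => [|x s IH] /=; first by split.
rewrite IH; split.
- by case=> H1 H2 t [<-|]; auto.
- by move=> H; split; auto.
Qed.

Lemma wf_subst (F V W : Type) (ar : F -> nat) (okv : V -> Prop) (okw : W -> Prop)
  (s : V -> term F W) (t : term F V) :
  wf_term ar okv t -> (forall v, okv v -> wf_term ar okw (s v)) ->
  wf_term ar okw (subst s t).
Proof.
move=> Ht Hs; move: t Ht; apply: term_ind' => [v /= /Hs //|f ts IH /= [Hsz Hall]].
split; first by rewrite size_map.
apply/foldr_and => u /In_seqmap [t [Ht ->]]; apply: IH => //.
by move/foldr_and: Hall; apply.
Qed.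

Lemma choices_fwd (F A : finType) rs ch : List.In ch (choices (F:=F) (A:=A) rs) ->
  forall r, List.In r rs -> exists x, List.In x ch /\ List.In x (prems_of r).
Proof.
elim: rs ch => [|r rs IH] ch /=; first by move=> _ r [].
move/In_flatten=> [l [/In_seqmap [x [Hx ->]] /In_seqmap [l' [Hl' ->]]]].
move=> r0 [<-|Hr0]; first by exists x; split=> //; left.
have [y [Hy1 Hy2]] := IH _ Hl' _ Hr0; exists y; split=> //; by right.
Qed.

Lemma choices_bwd (F A : finType) (Bad : gprem A -> Prop) rs :
  (forall r, List.In r rs -> exists x, List.In x (prems_of r) /\ Bad x) ->
  exists ch, List.In ch (choices (F:=F) (A:=A) rs) /\ forall x, List.In x ch -> Bad x.
Proof.
elim: rs => [|r rs IH] /= H; first by exists [::]; split; [left|].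
have [ch [Hch Hb]] := IH (fun r0 H0 => H r0 (or_intror H0)).
have [x [Hx Bx]] := H r (or_introl erefl).
exists (x :: ch); split.
- apply/In_flatten; exists [seq x :: l | l <- choices rs]; split.
  + by apply/In_seqmap; exists x.
  + by apply/In_seqmap; exists ch.
- by move=> y [<-|]; auto.
Qed.

Lemma gtrans_App (F A : Type) (G : gsos F A) f ts c t' :
  gtrans G (App f ts) c t' <->
  exists r, List.In r (g_rules G) /\ g_op r = f /\ g_act r = c /\
        exists s : gvar -> cterm F,
          agrees ts s /\
          (forall k i a, onth (g_pos r) k = Some (i, a) ->
             exists T, onth (map (gtrans G) ts) i = Some T /\ T a (s (GY k))) /\
          (forall i b, List.In (i, b) (g_neg r) ->
             exists T, onth (map (gtrans G) ts) i = Some T /\ forall u, ~ T b u) /\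
          t' = subst s (g_tgt r).
Proof. reflexivity. Qed.

Lemma ptrans_App (F A P : Type) (G : preg F A P) f ts c t' :
  ptrans G (App f ts) c t' <->
  exists r, List.In r (p_trules G) /\ t_op r = f /\ t_act r = c /\
         exists s : gvar -> cterm F,
           agrees ts s /\ prem_sat (map (psem G) ts) s (t_prem r) /\ t' = subst s (t_tgt r).
Proof. reflexivity. Qed.

Lemma pholds_App (F A P : Type) (G : preg F A P) f ts q :
  pholds G (App f ts) q <->
  exists r, List.In r (p_prules G) /\ q_op r = f /\ q_pred r = q /\
         exists s : gvar -> cterm F, agrees ts s /\ prem_sat (map (psem G) ts) s (q_prem r).
Proof. reflexivity. Qed.

Lemma build_sub (F X : Type) (R : cterm F -> X -> cterm F -> Prop)
  (ts : seq (cterm F)) (pos : seq (nat * X)) (d : cterm F) :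
  (forall k i b, onth pos k = Some (i,b) -> exists t u, onth ts i = Some t /\ R t b u) ->
  exists s, agrees ts s /\ forall k i b, onth pos k = Some (i,b) ->
     exists t, onth ts i = Some t /\ R t b (s (GY k)).
Proof.
move=> H.
have H' : forall k, exists u, forall i b, onth pos k = Some (i,b) ->
     exists t, onth ts i = Some t /\ R t b u.
  move=> k; case E: (onth pos k) => [[i b]|].
  - have [t [u [Ht Hu]]] := H _ _ _ E.
    by exists u => i' b' [<- <-]; exists t; split.
  - by exists d.
exists (fun v => match v with GX i => nth d ts i
   | GY k => proj1_sig (constructive_indefinite_description _ (H' k)) end); split.
- by move=> i t Ht /=; apply: onth_nth.
- move=> k i b Hk /=.
  exact: (proj2_sig (constructive_indefinite_description _ (H' k)) i b Hk).
Qed.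

Lemma onth_map_inv (X Y : Type) (g : X -> Y) s i y :
  onth (map g s) i = Some y -> exists x, onth s i = Some x /\ y = g x.
Proof. rewrite onth_map; case: (onth s i) => [x|] //= [<-]; by exists x. Qed.

Lemma In_axioms (F A : finType) (G : gsos F A) r :
  List.In r (plus_axioms G) <-> exists f a, g_ar G f = 0 /\
    ~~ has (fun r => (g_op r == f) && (g_act r == a)) (g_rules G) /\
    r = PPRule f (Prem [::] [::] [::] [::]) a.
Proof.
rewrite /plus_axioms In_flatten; split.
- move=> [l [/In_seqmap [f [/In_filter [_ /eqP Hf] ->]] /In_seqmap [a [/In_filter [_ Ha] ->]]]].
  by exists f, a.
- move=> [f [a [Hf [Ha ->]]]]; eexists; split.
  + apply/In_seqmap; exists f; split; last reflexivity.
    by apply/In_filter; split; [apply: mem_In; rewrite mem_enum | apply/eqP].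
  + apply/In_seqmap; exists a; split=> //.
    by apply/In_filter; split; [apply: mem_In; rewrite mem_enum|].
Qed.

Lemma In_negrules (F A : finType) (G : gsos F A) r :
  List.In r (plus_neg_rules G) <-> exists f a ch, 0 < g_ar G f /\
    List.In ch (choices (R_fa G f a)) /\ r = PPRule f (neg_prems ch) a.
Proof.
rewrite /plus_neg_rules In_flatten; split.
- move=> [l [/In_flatten [m [/In_seqmap [f [/In_filter [_ Hf] ->]]
     /In_seqmap [a [_ ->]]]] /In_seqmap [ch [Hch ->]]]].
  by exists f, a, ch.
- move=> [f [a [ch [Hf [Hch ->]]]]].
  exists [seq PPRule f (neg_prems ch0) a | ch0 <- choices (R_fa G f a)]; split.
  + apply/In_flatten; eexists; split.
    * apply/In_seqmap; exists f; split; last reflexivity.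
      by apply/In_filter; split; [apply: mem_In; rewrite mem_enum|].
    * apply/In_seqmap; exists a; split; [by apply: mem_In; rewrite mem_enum|reflexivity].
  + by apply/In_seqmap; exists ch.
Qed.

Lemma trans_step (F A : finType) (G : gsos F A) f ts
  (IH1 : forall t, List.In t ts -> forall a p', gtrans G t a p' <-> ptrans (Gplus G) t a p')
  (IH3 : forall t, List.In t ts -> forall a,
     pholds (Gplus G) t a <-> ~ exists p', ptrans (Gplus G) t a p') :
  forall c t', gtrans G (App f ts) c t' <-> ptrans (Gplus G) (App f ts) c t'.
Proof.
move=> c t'; rewrite gtrans_App ptrans_App; split.
- case=> r [Hr [Hop [Hact [s [Hag [Hpos [Hneg ->]]]]]]].
  exists (plus_trule r); split; first by apply/In_seqmap; exists r.
  split=> //; split=> //; exists s; split=> //; split=> //.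
  split; [|split; [by []|split; [|by []]]].
  + move=> k i b Hk; have [T [H0 HT]] := Hpos _ _ _ Hk; have [t [Ht ET]] := onth_map_inv H0; subst T.
    exists (psem (Gplus G) t); rewrite onth_map Ht; split=> //.
    by apply/(IH1 t (onth_In Ht)).
  + move=> i b Hk; have [T [H0 HT]] := Hneg _ _ Hk; have [t [Ht ET]] := onth_map_inv H0; subst T.
    exists (psem (Gplus G) t); rewrite onth_map Ht; split=> //.
    apply/(IH3 t (onth_In Ht)) => -[u Hu]; apply: (HT u).
    by apply/(IH1 t (onth_In Ht)).
- case=> tr [/In_seqmap [r [Hr ->]] [Hop [Hact [s [Hag [[Hpos [_ [Hneg _]]] ->]]]]]].
  exists r; split=> //; split=> //; split=> //; exists s; split=> //.
  split; [|split; [|by []]].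
  + move=> k i b Hk; have [S [H0 HS]] := Hpos _ _ _ Hk; have [t [Ht ES]] := onth_map_inv H0; subst S.
    exists (gtrans G t); rewrite onth_map Ht; split=> //.
    by apply/(IH1 t (onth_In Ht)).
  + move=> i b Hk; have [S [H0 HS]] := Hneg _ _ Hk; have [t [Ht ES]] := onth_map_inv H0; subst S.
    exists (gtrans G t); rewrite onth_map Ht; split=> //.
    move=> u /(IH1 t (onth_In Ht)) Hu.
    by move/(IH3 t (onth_In Ht)): HS; apply; exists u.
Qed.

Lemma wf_step (F A : finType) (G : gsos F A) (HG : wf_gsos G) f ts
  (Hsz : size ts = g_ar G f)
  (Hts : forall t, List.In t ts -> wf_closed (g_ar G) t)
  (IH2 : forall t, List.In t ts -> forall a p', ptrans (Gplus G) t a p' ->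
     wf_closed (g_ar G) p') :
  forall c t', ptrans (Gplus G) (App f ts) c t' -> wf_closed (g_ar G) t'.
Proof.
move=> c t'; rewrite ptrans_App.
case=> tr [/In_seqmap [r [Hr ->]] [/= Hop [_ [s [Hag [[Hpos _] ->]]]]]].
have [Hp1 [Hn1 Htgt]] := HG r Hr.
apply: (wf_subst Htgt) => -[i|k] /= Hv.
- have Hi : i < size ts by rewrite Hsz -Hop.
  have [t Ht] := onth_lt Hi.
  by rewrite (Hag _ _ Ht); apply: Hts; apply: onth_In Ht.
- have [[i b] Hk] := onth_lt Hv.
  have [S [H0 HS]] := Hpos _ _ _ Hk; have [t [Ht ES]] := onth_map_inv H0; subst S.
  exact: (IH2 t (onth_In Ht) b).
Qed.

Lemma pred_step (F A : finType) (G : gsos F A) (HG : wf_gsos G) f ts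
  (Hsz : size ts = g_ar G f)
  (IH3 : forall t, List.In t ts -> forall a,
     pholds (Gplus G) t a <-> ~ exists p', ptrans (Gplus G) t a p') :
  forall a, pholds (Gplus G) (App f ts) a <->
     ~ exists p', ptrans (Gplus G) (App f ts) a p'.
Proof.
move=> a; rewrite pholds_App; split.
- case=> r [Hr [Hop [Hpr [s [Hag Hsat]]]]] [u].
  rewrite ptrans_App => -[tr [/In_seqmap [r' [Hr' Etr]] [Htop [Htact [s' [Hag' [Hsat' _]]]]]]].
  subst tr; simpl in Htop, Htact.
  have [Hr1|Hr1] := List.in_app_or _ _ _ Hr.
  + have [f0 [a0 [Har [Hnh Er]]]] := proj1 (In_axioms _ _) Hr1; subst r.
    simpl in Hop, Hpr; subst f0 a0.
    move/negP: Hnh; apply; apply: (In_has Hr').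
    by rewrite /= Htop Htact !eqxx.
  + have [f0 [a0 [ch [Har [Hch Er]]]]] := proj1 (In_negrules _ _) Hr1; subst r.
    simpl in Hop, Hpr; subst f0 a0.
    have Hr'R : List.In r' (R_fa G f a).
      by apply/In_filter; split=> //; rewrite Htop Htact !eqxx.
    have [x [Hxch Hxp]] := choices_fwd Hch Hr'R.
    have [Hx1|Hx1] := List.in_app_or _ _ _ Hxp;
      have [[i b] [Hib Ex]] := proj1 (In_seqmap _ _ _) Hx1; subst x.
    * have [k Hk] := In_onth Hib.
      have [S [H0 HS]] := Hsat'.1 _ _ _ Hk.
      have [t [Ht ES]] := onth_map_inv H0; subst S.
      have Hin : List.In (i, b) (pr_ppos (neg_prems ch)).
        by apply/In_pmap; exists (inl (i, b)).
      have [S2 [H2 HS2]] := Hsat.2.2.1 _ _ Hin.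
      rewrite onth_map Ht /= in H2; case: H2 => ES2; subst S2.
      by move/(IH3 t (onth_In Ht)): HS2; apply; exists (s' (GY k)).
    * have [S [H0 HS]] := Hsat'.2.2.1 _ _ Hib.
      have [t [Ht ES]] := onth_map_inv H0; subst S.
      have Hin : List.In (i, b) (pr_pos (neg_prems ch)).
        by apply/In_pmap; exists (inr (i, b)).
      have [k Hk] := In_onth Hin.
      have [S2 [H2 HS2]] := Hsat.1 _ _ _ Hk.
      rewrite onth_map Ht /= in H2; case: H2 => ES2; subst S2.
      by move/(IH3 t (onth_In Ht)): HS; apply; exists (s (GY k)).
- move=> Hno; case: (ltnP 0 (g_ar G f)) => Har.
  + pose Bad (x : gprem A) := match x with
      | inl (i, b) => exists t, onth ts i = Some t /\ pholds (Gplus G) t b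
      | inr (i, b) => exists t, onth ts i = Some t /\ exists u, ptrans (Gplus G) t b u
      end.
    have Hbad : forall r, List.In r (R_fa G f a) ->
        exists x, List.In x (prems_of r) /\ Bad x.
      move=> r /In_filter [Hr /andP [/eqP Hop /eqP Hact]].
      apply: NNPP => Hnot; apply: Hno.
      have [Hp1 [Hn1 _]] := HG r Hr.
      have Hpos : forall k i b, onth (g_pos r) k = Some (i,b) ->
          exists t u, onth ts i = Some t /\ ptrans (Gplus G) t b u.
        move=> k i b Hk.
        have Hi : i < size ts by rewrite Hsz -Hop; exact: (Hp1 _ _ _ Hk).
        have [t Ht] := onth_lt Hi.
        exists t; apply: NNPP => Hn; apply: Hnot; exists (inl (i, b)); split.
        * apply: List.in_or_app; left; apply/In_seqmap; exists (i, b).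
          by split=> //; apply: onth_In Hk.
        * exists t; split=> //; apply/(IH3 t (onth_In Ht)) => -[u Hu].
          by apply: Hn; exists u.
      have [s [Hag Hs]] := build_sub (App f ts) Hpos.
      exists (subst s (g_tgt r)); apply/ptrans_App; exists (plus_trule r); split.
        by apply/In_seqmap; exists r.
      split=> //; split=> //; exists s; split=> //; split=> //.
      split; [|split; [by []|split; [|by []]]].
      * move=> k i b Hk; have [t [Ht Htr]] := Hs _ _ _ Hk.
        by exists (psem (Gplus G) t); rewrite onth_map Ht.
      * move=> i b Hib /=.
        have Hi : i < size ts by rewrite Hsz -Hop; exact: Hn1 _ _ Hib.
        have [t Ht] := onth_lt Hi.
        exists (psem (Gplus G) t); split; first by rewrite onth_map Ht.
        apply/(IH3 t (onth_In Ht)) => -[u Hu]; apply: Hnot; exists (inr (i, b)); split.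
        - apply: List.in_or_app; right; apply/In_seqmap; exists (i, b); by split.
        - by exists t; split=> //; exists u.
    have [ch [Hch Hchb]] := choices_bwd Hbad.
    have Hpos2 : forall k i b, onth (pr_pos (neg_prems ch)) k = Some (i,b) ->
        exists t u, onth ts i = Some t /\ ptrans (Gplus G) t b u.
      move=> k i b Hk; have [[[i' b']|[i' b']] [Hx //= [Ei Eb]]] := proj1 (In_pmap _ _ _) (onth_In Hk); subst i' b'.
      have [t [Ht [u Hu]]] := Hchb _ Hx; by exists t, u.
    have [s [Hag Hs]] := build_sub (App f ts) Hpos2.
    exists (PPRule f (neg_prems ch) a); split.
      apply: List.in_or_app; right; apply/In_negrules; by exists f, a, ch.
    split=> //; split=> //; exists s; split=> //.
    split; [|split; [by []|split; [|by []]]].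
    * move=> k i b Hk; have [t [Ht Htr]] := Hs _ _ _ Hk.
      by exists (psem (Gplus G) t); rewrite onth_map Ht.
    * move=> i b Hk; have [[[i' b']|[i' b']] [Hx //= [Ei Eb]]] := proj1 (In_pmap _ _ _) Hk; subst i' b'.
      have [t [Ht Hp]] := Hchb _ Hx.
      by exists (psem (Gplus G) t); rewrite onth_map Ht.
  + have Har0 : g_ar G f = 0 by apply/eqP; rewrite -leqn0.
    have Hts : ts = [::] by apply: size0nil; rewrite Hsz.
    subst ts.
    have Hnh : ~~ has (fun r => (g_op r == f) && (g_act r == a)) (g_rules G).
      apply/negP => /has_In [r' [Hr' /andP [/eqP Hop /eqP Hact]]].
      apply: Hno; have [Hp1 [Hn1 _]] := HG r' Hr'.
      exists (subst (fun _ => App f [::]) (g_tgt r')); apply/ptrans_App.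
      exists (plus_trule r'); split; first by apply/In_seqmap; exists r'.
      split=> //; split=> //; exists (fun _ => App f [::]); split.
        by move=> i t; rewrite onth0n.
      split=> //.
      split; [|split; [by []|split; [|by []]]].
      * move=> k i b Hk; have := Hp1 _ _ _ Hk; by rewrite Hop Har0.
      * move=> i b Hib; have := Hn1 _ _ Hib; by rewrite Hop Har0.
    exists (PPRule f (Prem [::] [::] [::] [::]) a); split.
      apply: List.in_or_app; left; apply/In_axioms; by exists f, a.
    split=> //; split=> //; exists (fun _ => App f [::]); split.
      by move=> i t; rewrite onth0n.
    split; [by move=> k i b; rewrite onth0n|split; [by []|split; by []]].
Qed.

Lemma main_ind (F A : finType) (G : gsos F A) (HG : wf_gsos G) (p : cterm F) :
  wf_closed (g_ar G) p ->
  (forall a p', gtrans G p a p' <-> ptrans (Gplus G) p a p') /\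
  (forall a p', ptrans (Gplus G) p a p' -> wf_closed (g_ar G) p') /\
  (forall a, pholds (Gplus G) p a <-> ~ exists p', ptrans (Gplus G) p a p').
Proof.
move: p; apply: term_ind' => [[]|f ts IH [Hsz Hall]].
have Hts : forall t, List.In t ts -> wf_closed (g_ar G) t.
  by move/foldr_and: Hall.
have IH' := fun t Ht => IH t Ht (Hts t Ht).
split; [|split].
- apply: trans_step => t Ht; [exact: (IH' t Ht).1 | exact: (IH' t Ht).2.2].
- apply: wf_step => // t Ht; exact: (IH' t Ht).2.1.
- apply: pred_step => // t Ht; exact: (IH' t Ht).2.2.
Qed.

Theorem lemma6 (F A : finType) (G : gsos F A) (HG : wf_gsos G)
    (p : cterm F) (a : A) (Hp : wf_closed (g_ar G) p) :
  (forall p' : cterm F, wf_closed (g_ar G) p' ->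
     (gtrans G p a p' <-> ptrans (Gplus G) p a p')) /\
  (pholds (Gplus G) p a <->
     ~ (exists p' : cterm F, wf_closed (g_ar G) p' /\ ptrans (Gplus G) p a p')) /\
  (pholds (Gplus G) p a <->
     ~ (exists p' : cterm F, wf_closed (g_ar G) p' /\ gtrans G p a p')).
Proof.
have [H1 [H2 H3]] := main_ind HG Hp.
split; first by move=> p' _; apply: H1.
split; rewrite H3; split.
- by move=> Hn [p' [_ Hp']]; apply: Hn; exists p'.
- by move=> Hn [p' Hp']; apply: Hn; exists p'; split=> //; apply: H2 Hp'.
- by move=> Hn [p' [_ /H1 Hp']]; apply: Hn; exists p'.
- move=> Hn [p' Hp']; apply: Hn; exists p'; split; first by apply: H2 Hp'.
  by apply/H1.
Qed.
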